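(* Let $M>0$ and $p,K\in\mathbb{N}$. Let $\boldsymbol\Phi(p,K)$ denote the set of all continuous maps from $\mathbb{R}^p$ to $\mathbb{R}^K$. Then \[ \inf_{\boldsymbol \phi \in \boldsymbol \Phi(p,K)} \frac{1}{(2M)^{2p}} \int_{[-M,M]^{p}} \int_{[-M,M]^{p}} \Big| -\|\boldsymbol x-\boldsymbol x'\|_2^2 - \langle \boldsymbol \phi(\boldsymbol x),\boldsymbol \phi(\boldsymbol x') \rangle \Big| \,\mathrm{d} \boldsymbol x\, \mathrm{d} \boldsymbol x' \geq \frac{2pM^2}{3}. \]
   Context: $\langle\cdot,\cdot\rangle$ denotes the standard Euclidean inner product on $\mathbb{R}^K$ and $\|\cdot\|_2$ the Euclidean norm on $\mathbb{R}^p$. *)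

(* Defs.v *)
From HB Require Import structures.
From mathcomp Require Import all_boot all_order all_algebra.
From mathcomp Require Import all_classical all_reals all_analysis.
Set Implicit Arguments. Unset Strict Implicit. Unset Printing Implicit Defensive.
Import Order.TTheory GRing.Theory Num.Theory.
Import numFieldNormedType.Exports.
Local Open Scope classical_set_scope.
Local Open Scope ring_scope.

Definition sqdist (R : realType) (n : nat) (x y : 'rV[R]_n) : R :=
  \sum_(i < n) (x ord0 i - y ord0 i) ^+ 2.

Definition dotp (R : realType) (n : nat) (u v : 'rV[R]_n) : R :=
  \sum_(i < n) u ord0 i * v ord0 i.

Definition vcons (R : realType) (n : nat) (t : R) (v : 'rV[R]_n) : 'rV[R]_n.+1 :=
  \row_(i < n.+1) (if unlift ord0 i is Some j then v ord0 j else t).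

(* Lebesgue integral over the cube [-M,M]^n of a (nonnegative) function,
   computed as the iterated one-dimensional Lebesgue integrals over [-M,M]
   (equal to the n-dimensional Lebesgue integral by Tonelli). *)
Fixpoint cube_integral (R : realType) (M : R) (n : nat) :
    ('rV[R]_n -> \bar R) -> \bar R :=
  match n with
  | 0 => fun f => f 0%R
  | n'.+1 => fun f =>
      (\int[@lebesgue_measure R]_(t in `[(- M)%R, M%R]%classic)
         cube_integral M (fun v : 'rV[R]_n' => f (vcons t v)))%E
  end.

Definition embedding_error (R : realType) (M : R) (p K : nat)
    (phi : 'rV[R]_p -> 'rV[R]_K) : \bar R :=
  ((((2 * M) ^+ (2 * p))^-1)%:E *
    cube_integral M (fun x : 'rV[R]_p =>
      cube_integral M (fun x' : 'rV[R]_p =>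
        (`| - sqdist x x' - dotp (phi x) (phi x') |)%:E)))%E.

(* Main.v *)
Require Import Defs.
From HB Require Import structures.
From mathcomp Require Import all_boot all_order all_algebra.
From mathcomp Require Import all_classical all_reals all_analysis.
From mathcomp Require Import ring lra.
Import Order.TTheory GRing.Theory Num.Theory.
Import numFieldNormedType.Exports.
Local Open Scope classical_set_scope.
Local Open Scope ring_scope.
Section C.
Variable R : realType.
Lemma coord_cont m n i j : continuous (fun v : 'M[R]_(m,n) => v i j).
Proof.
move=> u A /nbhs_ballP[e /= e0 eA].
by apply/nbhs_ballP; exists e => //= v [_ uv]; apply: eA; exact: uv.
Qed.
Lemma mx_cont (T : topologicalType) m n (f : T -> 'M[R]_(m,n)) :
  (forall i j, continuous (fun x => f x i j)) -> continuous f.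
Proof.
move=> cf x A /nbhs_ballP[e /= e0 eA].
have : \forall y \near x, forall i j, ball (f x i j) e (f y i j).
  apply: filter_forall => i; apply: filter_forall => j.
  exact: (cf i j x _ (nbhsx_ballx _ _ e0)).
by apply: filterS => y H; apply: eA; split.
Qed.
Lemma cD (T : topologicalType) (f g : T -> R) : continuous f -> continuous g -> continuous (fun x => f x + g x).
Proof. by move=> cf cg x; exact: (@continuousD R R^o T f g x (cf x) (cg x)). Qed.
Lemma cM (T : topologicalType) (f g : T -> R) : continuous f -> continuous g -> continuous (fun x => f x * g x).
Proof. by move=> cf cg x; exact: (@continuousM R T f g x (cf x) (cg x)). Qed.
Lemma cN (T : topologicalType) (f : T -> R) : continuous f -> continuous (fun x => - f x).
Proof. by move=> cf x; exact: (@continuousN R R^o T f x (cf x)). Qed.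
Lemma cB (T : topologicalType) (f g : T -> R) : continuous f -> continuous g -> continuous (fun x => f x - g x).
Proof. by move=> cf cg; apply: cD => //; apply: cN. Qed.
Lemma cX2 (T : topologicalType) (f : T -> R) : continuous f -> continuous (fun x => f x ^+ 2).
Proof. move=> cf; have -> : (fun x => f x ^+ 2) = (fun x => f x * f x) by apply/funext => x; rewrite expr2.
exact: cM. Qed.
Lemma cnorm (T : topologicalType) (f : T -> R) : continuous f -> continuous (fun x => `|f x|).
Proof. by move=> cf x; apply: continuous_comp; [exact: cf|exact: norm_continuous]. Qed.
Lemma ccst (T : topologicalType) (c : R) : continuous (fun _ : T => c).
Proof. exact: cst_continuous. Qed.
Lemma csum_seq (T : topologicalType) (I : Type) (r : seq I) (F : I -> T -> R) :
  (forall i, continuous (F i)) -> continuous (fun x => \sum_(i <- r) F i x).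
Proof.
move=> cF; elim: r => [|a r IH].
  have -> : (fun x => \sum_(i <- [::]) F i x) = (fun=> 0) by apply/funext => x; rewrite big_nil.
  exact: ccst.
have -> : (fun x => \sum_(i <- a :: r) F i x) = (fun x => F a x + \sum_(i <- r) F i x) by apply/funext => x; rewrite big_cons.
exact: cD.
Qed.
Lemma csum (T : topologicalType) n (F : 'I_n -> T -> R) :
  (forall i, continuous (F i)) -> continuous (fun x => \sum_(i < n) F i x).
Proof. exact: csum_seq. Qed.
Arguments cD {T f g}. Arguments cM {T f g}. Arguments cN {T f}. Arguments cB {T f g}. Arguments cX2 {T f}. Arguments cnorm {T f}.
Lemma cfst (T U : topologicalType) : continuous (fun z : T * U => z.1).
Proof. by move=> [a b]; exact: cvg_fst. Qed.
Lemma csnd (T U : topologicalType) : continuous (fun z : T * U => z.2).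
Proof. by move=> [a b]; exact: cvg_snd. Qed.
Lemma cpair (T U V : topologicalType) (f : T -> U) (g : T -> V) :
  continuous f -> continuous g -> continuous (fun x => (f x, g x)).
Proof. by move=> cf cg x; apply: cvg_pair; [exact: cf|exact: cg]. Qed.
Lemma ccomp (T U V : topologicalType) (f : T -> U) (g : U -> V) :
  continuous f -> continuous g -> continuous (fun x => g (f x)).
Proof. by move=> cf cg x; apply: continuous_comp; [exact: cf|exact: cg]. Qed.

Arguments ccomp {T U V} f g. Arguments cpair {T U V f g}.
Variables (M : R) (hM : 0 < M).
Local Ltac Lra := let h := fresh in have h := hM; lra.
Local Notation mu := (@lebesgue_measure R).
Definition Rint (g : R -> R) := Rintegral mu `[(- M)%R, M%R]%classic g.

Lemma mI : measurable (`[(- M)%R, M%R]%classic : set (measurableTypeR R)).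
Proof. exact: measurable_itv. Qed.

Lemma int1 (g : R -> R) : continuous g -> mu.-integrable `[(- M)%R, M%R]%classic (EFin \o g).
Proof.
move=> cg; apply: continuous_compact_integrable; first exact: segment_compact.
exact: continuous_subspaceT.
Qed.

Arguments int1 {g}.
Lemma int1E (g : R -> R) : continuous g ->
  (\int[mu]_(x in `[(- M)%R, M%R]%classic) (g x)%:E)%E = (Rint g)%:E.
Proof. by move=> cg; rewrite /Rint /Rintegral fineK //; apply: integrable_fin_num; [exact: mI|exact: int1]. Qed.

Arguments int1E {g}.
Lemma muI : mu `[(- M)%R, M%R]%classic = (2 * M)%:E.
Proof.
have h : (- M < M) by Lra.
by rewrite lebesgue_measure_itv /= lte_fin h -EFinD; congr EFin; Lra.
Qed.

Lemma Rint_cst (c : R) : Rint (fun=> c) = c * (2 * M).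
Proof. rewrite /Rint (Rintegral_cst mu mI); congr (_ * _); exact: (congr1 fine muI). Qed.

Lemma RintD (f g : R -> R) : continuous f -> continuous g -> Rint (fun x => f x + g x) = Rint f + Rint g.
Proof. by move=> cf cg; rewrite /Rint (RintegralD mI (int1 cf) (int1 cg)). Qed.

Lemma RintZ (c : R) (f : R -> R) : continuous f -> Rint (fun x => c * f x) = c * Rint f.
Proof. by move=> cf; rewrite /Rint (RintegralZl c mI (int1 cf)). Qed.

Lemma Rint_le (f g : R -> R) : continuous f -> continuous g -> (forall x, f x <= g x) -> Rint f <= Rint g.
Proof. by move=> cf cg fg; rewrite /Rint (le_Rintegral mI (int1 cf) (int1 cg)). Qed.

Lemma Rint_param (T : topologicalType) (G : T -> R -> R) :
  continuous (fun z : T * R => G z.1 z.2) -> continuous (fun y => Rint (G y)).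
Proof.
move=> cG y0; apply/cvgrPdist_lt => e e0.
have cGy y : continuous (G y).
  by apply: (ccomp (fun t => (y, t)) (fun z : T * R => G z.1 z.2)) => //; apply: cpair; [exact: cst_continuous|move=> ?; exact: cvg_id].
pose e' := e / (4 * M).
have e'0 : 0 < e' by apply: divr_gt0 => //; Lra.
have key : \forall y \near y0, forall t, `[(- M)%R, M%R]%classic t -> `|G y0 t - G y t| < e'.
  apply: ((compact_near_coveringP _).1 (@segment_compact R (- M) M) T (nbhs y0) (fun y t => `|G y0 t - G y t| < e')) => t _.
  have e20 : 0 < e' / 2 by apply: divr_gt0 => //; Lra.
  have := cG (y0, t) _ (nbhsx_ballx _ _ e20).
  move=> [[A B] /= [Ay0 Bt] sAB].
  exists (B, A) => //= -[t' y] /= [Bt' Ay].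
  have h1 := sAB (y0, t') (conj (nbhs_singleton Ay0) Bt').
  have h2 := sAB (y, t') (conj Ay Bt').
  move: h1 h2; rewrite /ball /= => h1 h2.
  have -> : G y0 t' - G y t' = (G y0 t - G y t') - (G y0 t - G y0 t') by ring.
  apply: le_lt_trans (ler_normB _ _) _.
  by rewrite [ltRHS](splitr e'); apply: ltrD.
near=> y.
rewrite /Rint -(RintegralB mI (int1 (cGy y0)) (int1 (cGy y))).
apply: le_lt_trans (le_normr_Rintegral mI (int1 (cB (cGy y0) (cGy y)))) _.
apply: (@le_lt_trans _ _ (Rint (fun=> e'))).
  apply: (le_Rintegral mI (int1 (cnorm (cB (cGy y0) (cGy y)))) (int1 (ccst _ e'))).
  by move=> t It; apply: ltW; exact: (near key y).
rewrite Rint_cst /e'.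
have -> : e / (4 * M) * (2 * M) = e / 2 by field; Lra.
Lra.
Unshelve. all: end_near.
Qed.

Lemma ccurry (X T U V : topologicalType) (H : T -> U -> V) (f : X -> T) (g : X -> U) :
  continuous (fun z : T * U => H z.1 z.2) -> continuous f -> continuous g -> continuous (fun x => H (f x) (g x)).
Proof. by move=> cH cf cg x; exact: (ccomp (fun x => (f x, g x)) _ (cpair cf cg) cH x). Qed.
Lemma ck (T U : topologicalType) (c : U) : continuous (fun _ : T => c).
Proof. exact: cst_continuous. Qed.
Lemma cid (T : topologicalType) : continuous (fun x : T => x).
Proof. by move=> ?; exact: cvg_id. Qed.

Lemma cvcons n : continuous (fun z : R * 'rV[R]_n => vcons z.1 z.2).
Proof.
apply: mx_cont => i j.
have -> : (fun z : R * 'rV[R]_n => vcons z.1 z.2 i j) =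
  (fun z => if unlift ord0 j is Some k then z.2 ord0 k else z.1).
  by apply/funext => z; rewrite /vcons mxE.
case: (unlift ord0 j) => [k|]; last exact: cfst.
exact: (ccomp (fun z : R * 'rV[R]_n => z.2) (fun v : 'rV[R]_n => v ord0 k) (@csnd _ _) (coord_cont _ _ ord0 k)).
Qed.

Lemma cvcons_t n (t : R) (f : 'rV[R]_n.+1 -> R) : continuous f -> continuous (fun v : 'rV[R]_n => f (vcons t v)).
Proof.
move=> cf; apply: (ccomp (fun v => vcons (t, v).1 (t, v).2) f) => //.
apply: (ccomp (fun v => (t, v)) (fun z : R * 'rV[R]_n => vcons z.1 z.2)); last exact: cvcons.
by apply: cpair; [exact: cst_continuous|move=> ?; exact: cvg_id].
Qed.

Lemma CI_param n : forall (T : topologicalType) (H : T -> 'rV[R]_n -> R),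
  continuous (fun z : T * 'rV[R]_n => H z.1 z.2) ->
  exists J : T -> R, continuous J /\ forall y, cube_integral M (fun v => (H y v)%:E) = (J y)%:E.
Proof.
elim: n => [|n IH] T H cH.
  exists (fun y => H y 0); split; last by [].
  exact: (@ccurry T T _ _ H (fun y => y) (fun _ => 0) cH (@cid _) (ck _ _ _)).
have cH' : continuous (fun z : (T * R) * 'rV[R]_n => H z.1.1 (vcons z.1.2 z.2)).
  apply: (ccomp (fun z : (T * R) * 'rV[R]_n => (z.1.1, vcons z.1.2 z.2)) (fun z : T * 'rV[R]_n.+1 => H z.1 z.2)) => //.
  apply: cpair.
    exact: (ccomp (fun z : (T * R) * 'rV[R]_n => z.1) (fun z : T * R => z.1) (@cfst _ _) (@cfst _ _)).
  apply: (ccomp (fun z : (T * R) * 'rV[R]_n => (z.1.2, z.2)) (fun z : R * 'rV[R]_n => vcons z.1 z.2)); last exact: cvcons.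
  apply: cpair; last exact: csnd.
  exact: (ccomp (fun z : (T * R) * 'rV[R]_n => z.1) (fun z : T * R => z.2) (@cfst _ _) (@csnd _ _)).
have [J' [cJ' HJ']] := IH (T * R)%type (fun yt v => H yt.1 (vcons yt.2 v)) cH'.
have cJ't y : continuous (fun t => J' (y, t)).
  apply: (ccomp (fun t => (y, t)) J') => //.
  by apply: cpair; [exact: cst_continuous|move=> ?; exact: cvg_id].
exists (fun y => Rint (fun t => J' (y, t))); split.
  apply: (@Rint_param _ (fun y t => J' (y, t))).
  apply: (ccomp (fun z : T * R => (z.1, z.2)) J') => //.
  by apply: cpair; [exact: cfst|exact: csnd].
move=> y /=.
rewrite -int1E //.
congr (integral _ _ _); apply/funext => t; exact: (HJ' (y, t)).
Qed.

Definition CIr {n} (f : 'rV[R]_n -> R) := fine (cube_integral M (fun v => (f v)%:E)).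

Lemma CIE n (f : 'rV[R]_n -> R) : continuous f -> cube_integral M (fun v => (f v)%:E) = (CIr f)%:E.
Proof.
move=> cf; have [J [_ HJ]] := @CI_param n R (fun _ v => f v) (ccomp _ _ (@csnd _ _) cf).
by rewrite /CIr (HJ 0).
Qed.

Lemma CIr_param n (T : topologicalType) (H : T -> 'rV[R]_n -> R) :
  continuous (fun z : T * 'rV[R]_n => H z.1 z.2) -> continuous (fun y => CIr (H y)).
Proof.
move=> cH; have [J [cJ HJ]] := @CI_param n T H cH.
suff -> : (fun y => CIr (H y)) = J by [].
by apply/funext => y; rewrite /CIr HJ.
Qed.

Lemma cS n (f : 'rV[R]_n.+1 -> R) : continuous f -> continuous (fun t => CIr (fun v : 'rV[R]_n => f (vcons t v))).
Proof.
move=> cf; apply: (@CIr_param n R (fun t v => f (vcons t v))).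
exact: (ccomp _ _ (@cvcons n) cf).
Qed.

Lemma CIr_S n (f : 'rV[R]_n.+1 -> R) : continuous f ->
  CIr f = Rint (fun t => CIr (fun v : 'rV[R]_n => f (vcons t v))).
Proof.
move=> cf; rewrite {1}/CIr /=.
have -> : (fun t => cube_integral M (fun v : 'rV[R]_n => (f (vcons t v))%:E)) =
          (fun t => (CIr (fun v => f (vcons t v)))%:E).
  by apply/funext => t; rewrite CIE //; exact: cvcons_t.
by rewrite int1E //; exact: cS.
Qed.

Lemma CIr_cst n (c : R) : CIr (fun _ : 'rV[R]_n => c) = c * (2 * M) ^+ n.
Proof.
elim: n => [|n IH]; first by rewrite /CIr /= expr0 mulr1.
rewrite CIr_S; last exact: ck.
by rewrite IH Rint_cst exprS; ring.
Qed.

Lemma CIrD n (f g : 'rV[R]_n -> R) : continuous f -> continuous g ->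
  CIr (fun v => f v + g v) = CIr f + CIr g.
Proof.
elim: n f g => [|n IH] f g cf cg; first by [].
rewrite !CIr_S //; last exact: cD.
rewrite -RintD; try exact: cS.
by congr Rint; apply/funext => t; rewrite IH //; exact: cvcons_t.
Qed.

Lemma CIrZ n (c : R) (f : 'rV[R]_n -> R) : continuous f ->
  CIr (fun v => c * f v) = c * CIr f.
Proof.
elim: n f => [|n IH] f cf; first by [].
rewrite !CIr_S //; last by apply: cM => //; exact: ck.
rewrite -RintZ; last exact: cS.
by congr Rint; apply/funext => t; rewrite IH //; exact: cvcons_t.
Qed.

Lemma CIr_le n (f g : 'rV[R]_n -> R) : continuous f -> continuous g ->
  (forall v, f v <= g v) -> CIr f <= CIr g.
Proof.
elim: n f g => [|n IH] f g cf cg fg; first by rewrite /CIr /=.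
rewrite !CIr_S //; apply: Rint_le; try exact: cS.
by move=> t; apply: IH => //; exact: cvcons_t.
Qed.

Lemma CIr_sum n (I : Type) (r : seq I) (F : I -> 'rV[R]_n -> R) :
  (forall i, continuous (F i)) ->
  CIr (fun v => \sum_(i <- r) F i v) = \sum_(i <- r) CIr (F i).
Proof.
move=> cF; elim: r => [|a r IH].
  rewrite big_nil; under eq_fun do rewrite big_nil.
  by rewrite CIr_cst mul0r.
rewrite big_cons; under eq_fun do rewrite big_cons.
by rewrite CIrD ?IH //; exact: csum_seq.
Qed.

Lemma Rint_pow k : Rint (fun t => t ^+ k) = (M ^+ k.+1 - (- M) ^+ k.+1) / k.+1%:R.
Proof.
pose F := fun x : R => x ^+ k.+1 * (k.+1%:R)^-1.
have cF : continuous F.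
  apply: cM; last exact: ck.
  exact: exprn_continuous.
have dF x : derivable F x 1.
  apply: derivableM; first exact: exprn_derivable.
  exact: derivable_cst.
have hMM : - M < M by Lra.
have h1 : {within `[(- M)%R, M%R], continuous (fun t : R => t ^+ k)}.
  apply: continuous_subspaceT; exact: exprn_continuous.
have h2 : derivable_oo_LRcontinuous F (- M) M.
  split.
  + by move=> x _; exact: dF.
  + exact: cvg_at_right_filter (cF _).
  + exact: cvg_at_left_filter (cF _).
have h3 : {in `](- M)%R, M%R[, (F^`())%classic =1 (fun t : R => t ^+ k)}.
  move=> x _; rewrite /F derive1Mr; last exact: exprn_derivable.
  rewrite derive1E exp_derive /= [_%:A]mulr1 -[_ *: _]/(_ * _) mulrC mulrA mulVf ?mul1r // pnatr_eq0.
have := @continuous_FTC2 R (fun t => t ^+ k) F (- M) M hMM h1 h2 h3.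
rewrite int1E; last exact: exprn_continuous.
move=> [->]; rewrite /F; ring.
Qed.

Lemma ccoordg n (i : 'I_n) (g : R -> R) : continuous g -> continuous (fun v : 'rV[R]_n => g (v ord0 i)).
Proof. by move=> cg; apply: (ccomp _ _ (coord_cont _ _ ord0 i) cg). Qed.

Lemma CIr_coord n (i : 'I_n.+1) (g : R -> R) : continuous g ->
  CIr (fun v : 'rV[R]_n.+1 => g (v ord0 i)) = (2 * M) ^+ n * Rint g.
Proof.
elim: n i => [|n IH] i cg.
  rewrite CIr_S; last exact: ccoordg.
  rewrite expr0 mul1r; congr Rint; apply/funext => t.
  have -> : i = ord0 by apply/val_inj; case: i => [[]].
  by rewrite /CIr /= /vcons mxE unlift_none.
rewrite CIr_S; last exact: ccoordg.
case: (unliftP ord0 i) => [j ->|->].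
  have -> : (fun t => CIr (fun v : 'rV[R]_n.+1 => g (vcons t v ord0 (lift ord0 j)))) =
            (fun t => CIr (fun v : 'rV[R]_n.+1 => g (v ord0 j))).
    by apply/funext => t; congr CIr; apply/funext => v; rewrite /vcons mxE liftK.
  by rewrite IH // Rint_cst exprS; ring.
have -> : (fun t => CIr (fun v : 'rV[R]_n.+1 => g (vcons t v ord0 ord0))) =
          (fun t => (2 * M) ^+ n.+1 * g t).
  by apply/funext => t; rewrite mulrC -(CIr_cst n.+1 (g t)); congr CIr; apply/funext => v; rewrite /vcons mxE unlift_none.
by rewrite RintZ.
Qed.

Lemma Rint_sq_shift (a : R) :
  Rint (fun s => (a - s) ^+ 2) = 2 * M * a ^+ 2 + Rint (fun t => t ^+ 2).
Proof.
have -> : (fun s => (a - s) ^+ 2) = (fun s => (a ^+ 2 + (- 2 * a) * s ^+ 1) + s ^+ 2).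
  by apply/funext => s; ring.
have ce k : continuous (fun t : R => t ^+ k) by exact: exprn_continuous.
rewrite RintD //; last by apply: cD; [exact: ck|apply: cM; [exact: ck|]].
rewrite RintD //; [|exact: ck|by apply: cM; [exact: ck|]].
rewrite (Rint_cst (a ^+ 2)) (RintZ (- 2 * a) (fun t => t ^+ 1)) ?(Rint_pow 1) //; ring.
Qed.

Lemma main_bound p' K (phi : 'rV[R]_p'.+1 -> 'rV[R]_K) : continuous phi ->
  ((2 * p'.+1%:R * M ^+ 2 / 3)%:E <= embedding_error M phi)%E.
Proof.
move=> cphi.
set n := p'.+1.
set q := 2 * M.
pose f (k : 'I_K) (x : 'rV[R]_n) := phi x ord0 k.
have cf k : continuous (f k) by exact: (ccomp _ _ cphi (coord_cont _ _ ord0 k)).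
pose Q (x x' : 'rV[R]_n) := sqdist x x' + dotp (phi x) (phi x').
have c1 i : continuous (fun z : 'rV[R]_n * 'rV[R]_n => z.1 ord0 i)
  by exact: (ccomp _ _ (@cfst _ _) (coord_cont _ _ ord0 i)).
have c2 i : continuous (fun z : 'rV[R]_n * 'rV[R]_n => z.2 ord0 i)
  by exact: (ccomp _ _ (@csnd _ _) (coord_cont _ _ ord0 i)).
have cQ : continuous (fun z : 'rV[R]_n * 'rV[R]_n => Q z.1 z.2).
  rewrite /Q /sqdist /dotp; apply: cD; apply: csum => i.
    by apply: cX2; apply: cB.
  apply: cM.
    exact: (ccomp _ _ (@cfst _ _) (cf i)).
  exact: (ccomp _ _ (@csnd _ _) (cf i)).
have cQx x : continuous (Q x).
  exact: (@ccurry _ _ _ _ Q (fun=> x) (fun x' => x') cQ (ck _ _ _) (@cid _)).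
have cnQ : continuous (fun z : 'rV[R]_n * 'rV[R]_n => `|Q z.1 z.2|) by exact: cnorm.
have cnQx x : continuous (fun x' => `|Q x x'|) by exact: cnorm.
have E1 : (fun x : 'rV[R]_n => cube_integral M (fun x' : 'rV[R]_n =>
            (`| - sqdist x x' - dotp (phi x) (phi x') |)%:E)) =
          (fun x => (CIr (fun x' => `|Q x x'|))%:E).
  apply/funext => x; rewrite -CIE //; congr cube_integral; apply/funext => x'.
  by rewrite /Q -opprD normrN.
rewrite /embedding_error E1 CIE; last exact: (@CIr_param n _ (fun x x' => `|Q x x'|) cnQ).
rewrite -EFinM lee_fin.
set m2 := Rint (fun t => t ^+ 2).
have m2E : m2 = 2 * M ^+ 3 / 3 by rewrite /m2 Rint_pow; ring.
have ce k : continuous (fun t : R => t ^+ k) by exact: exprn_continuous.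
have cCQ : continuous (fun x => CIr (Q x)) by exact: (@CIr_param n _ Q cQ).
have step2 : CIr (fun x => CIr (Q x)) <= CIr (fun x => CIr (fun x' => `|Q x x'|)).
  apply: CIr_le => //; first exact: (@CIr_param n _ (fun x x' => `|Q x x'|) cnQ).
  by move=> x; apply: CIr_le => // x'; exact: ler_norm.
pose A (x : 'rV[R]_n) := \sum_(i < n) q ^+ p' * (q * x ord0 i ^+ 2 + m2) + \sum_(k < K) CIr (f k) * f k x.
have step3 x : CIr (Q x) = A x.
  have cs1 i : continuous (fun v : 'rV[R]_n => (x ord0 i - v ord0 i) ^+ 2).
    by apply: cX2; apply: cB; [exact: ck|exact: coord_cont].
  have cs2 k : continuous (fun v : 'rV[R]_n => phi x ord0 k * phi v ord0 k).
    by apply: cM; [exact: ck|exact: cf].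
  rewrite /Q /sqdist /dotp CIrD; [|exact: csum|exact: csum].
  rewrite !CIr_sum //.
  congr (_ + _); apply: eq_bigr => i _.
    rewrite (CIr_coord p' i (fun s => (x ord0 i - s) ^+ 2)); last by apply: cX2; apply: cB; [exact: ck|exact: cid].
    by rewrite Rint_sq_shift.
  by rewrite (CIrZ _ (f i x) (f i)) // mulrC.
have step4 : CIr (fun x => CIr (Q x)) = CIr A by congr CIr; apply/funext => x; exact: step3.
have cA1 i : continuous (fun x : 'rV[R]_n => q * x ord0 i ^+ 2 + m2).
  by apply: cD; [apply: cM; [exact: ck|apply: cX2; exact: coord_cont]|exact: ck].
have step5 : CIr A = \sum_(i < n) q ^+ p' * (q * (q ^+ p' * m2) + m2 * q ^+ n) + \sum_(k < K) CIr (f k) * CIr (f k).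
  have cs1 i : continuous (fun x : 'rV[R]_n => q ^+ p' * (q * x ord0 i ^+ 2 + m2)).
    by apply: cM; [exact: ck|exact: cA1].
  have cs2 k : continuous (fun x : 'rV[R]_n => CIr (f k) * f k x).
    by apply: cM; [exact: ck|exact: cf].
  rewrite /A CIrD; [|exact: csum|exact: csum].
  rewrite !CIr_sum //.
  congr (_ + _); apply: eq_bigr => i _; last by rewrite CIrZ.
  rewrite CIrZ // CIrD; [|by apply: cM; [exact: ck|apply: cX2; exact: coord_cont]|exact: ck].
  rewrite CIrZ; last by apply: cX2; exact: coord_cont.
  by rewrite (CIr_coord p' i (fun s => s ^+ 2)) // CIr_cst.
have step6 : n%:R * (q ^+ p' * (q * (q ^+ p' * m2) + m2 * q ^+ n)) <= CIr A.
  rewrite step5 -[X in X <= _]addr0; apply: lerD.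
    by rewrite sumr_const card_ord mulr_natl.
  by apply: sumr_ge0 => k _; rewrite -expr2; exact: sqr_ge0.
have q0 : 0 < q by rewrite /q; Lra.
have step7 : CIr A <= CIr (fun x => CIr (fun x' => `|Q x x'|)) by rewrite -step4.
apply: le_trans (ler_wpM2l _ (le_trans step6 step7)).
rewrite le_eqVlt; apply/orP; left; apply/eqP.
have r0 : q ^+ p' != 0 by rewrite expf_neq0 // gt_eqF.
have M0 : M != 0 by rewrite gt_eqF.
rewrite m2E [(2 * n)%N]mulnC exprM -/q.
have qn : q ^+ n = q * q ^+ p' by rewrite /n exprS.
rewrite qn.
move: r0; set r := q ^+ p' => r0.
rewrite /q; field.
  by rewrite r0 M0.
by rewrite invr_ge0 exprn_ge0 // mulr_ge0 // ltW.
Qed.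
End C.

Theorem proposition4p1 (R : realType) (M : R) (p K : nat) (hM : 0 < M) :
  ((2 * p%:R * M ^+ 2 / 3)%:E <=
   ereal_inf [set @embedding_error R M p K phi |
                phi in [set phi : 'rV[R]_p -> 'rV[R]_K | continuous phi]])%E.
Proof.
apply: le_ereal_inf_tmp => _ [phi cphi <-].
case: p phi cphi => [|p'] phi cphi; last exact: main_bound.
rewrite /embedding_error /= mulr0 !mul0r -EFinM lee_fin.
apply: mulr_ge0 => //.
by rewrite invr_ge0 exprn_ge0 // mulr_ge0 // ltW.
Qed.
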